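(* Suppose that for each sequence $R\in\mathbb{R}^{\mathbb{N}}$, $\mathcal{Y}_R$ is a family of metric spaces with uniform property A. If $\mathcal{X}$ is a family of metric spaces such that $\mathcal{X}$ is uniformly $R$-decomposable over $\mathcal{Y}_R$ for every $R\in\mathbb{R}^{\mathbb{N}}$, then $\mathcal{X}$ has uniform property A.
   Context: A family $\mathcal{U}$ of metric subspaces of a metric space $(X,d)$ is $r$-disjoint if $d(x,y)>r$ whenever $x\in U$, $y\in U'$ and $U\neq U'$ are elements of $\mathcal{U}$. For families $\mathcal{X},\mathcal{Y}$ of metric spaces and $R=(R_1,R_2,\dots)\in\mathbb{R}^{\mathbb{N}}$, $\mathcal{X}$ is uniformly $R$-decomposable over $\mathcal{Y}$ if there is an integer $k$ such that for each $X\in\mathcal{X}$ there exist subcollections $\mathcal{U}_1,\dots,\mathcal{U}_k\subseteq\mathcal{Y}$, consisting of subspaces of $X$ with the induced metric, such that each $\mathcal{U}_i$ is $R_i$-disjoint and $\bigcup_i\mathcal{U}_i$ covers $X$. For a metric space $X$, $\ell^1(X)$ is the $\ell^1$-space of the underlying set and $\xi_x$ denotes the value of a map $\xi\colon X\to\ell^1(X)$ at $x$. Such a map has $\varepsilon$-variation if for each $k\in\mathbb{N}$ and $x_1,x_2\in X$ with $d(x_1,x_2)\le k$ one has $\|\xi_{x_1}-\xi_{x_2}\|_1\le k\varepsilon$. A family $\mathcal{X}$ has uniform property A if for each $\varepsilon>0$ there is $S>0$ such that for each $X\in\mathcal{X}$ there is $\xi\colon X\to\ell^1(X)$ with $\|\xi_x\|_1=1$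 for all $x$, $\xi$ has $\varepsilon$-variation, and $\operatorname{supp}\xi_x\subset\bar B(x,S)$ for all $x\in X$. (The paper introduces uniform property A for families of discrete metric spaces with bounded geometry.) *)

(* Defs.v *)
From Stdlib Require Import Reals List.
Open Scope R_scope.

Record MetricSpace := {
  carrier :> Type;
  dist : carrier -> carrier -> R;
  dist_refl : forall x, dist x x = 0;
  dist_eq : forall x y, dist x y = 0 -> x = y;
  dist_sym : forall x y, dist x y = dist y x;
  dist_tri : forall x y z, dist x z <= dist x y + dist y z
}.

Arguments dist {m} _ _.

Definition mfamily := MetricSpace -> Prop.

Definition subspace (X : MetricSpace) (U : X -> Prop) : MetricSpace.
Proof.
  refine {| carrier := {x : X | U x};
            dist := fun a b => dist (proj1_sig a) (proj1_sig b) |}.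
  - intros [x hx]; apply dist_refl.
  - intros [x hx] [y hy] h; simpl in h.
    pose proof (dist_eq X x y h) as e; subst y.
    f_equal; apply Classical_Prop.proof_irrelevance.
  - intros [x hx] [y hy]; apply dist_sym.
  - intros [x hx] [y hy] [z hz]; apply dist_tri.
Defined.

Definition r_disjoint (X : MetricSpace) (r : R) (UU : (X -> Prop) -> Prop) : Prop :=
  forall U U' : X -> Prop, UU U -> UU U' -> U <> U' ->
    forall x y : X, U x -> U' y -> dist x y > r.

(* Uniform R-decomposability of XX over YY, for R = (R_1, R_2, ...);
   R_i is represented as Rs (i-1), i.e. the collections are indexed by
   i = 0, ..., k-1 and the i-th one is (Rs i)-disjoint. *)
Definition uniformly_decomposable (Rs : nat -> R) (XX YY : mfamily) : Prop :=
  exists k : nat, forall X : MetricSpace, XX X ->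
    exists UU : nat -> (X -> Prop) -> Prop,
      (forall i, (i < k)%nat -> forall U, UU i U -> YY (subspace X U)) /\
      (forall i, (i < k)%nat -> r_disjoint X (Rs i) (UU i)) /\
      (forall x : X, exists i U, (i < k)%nat /\ UU i U /\ U x).

(* l^1(X): the l^1 norm of f : X -> R is the supremum of the finite sums
   sum_{y in F} |f y| over finite subsets F of X (duplicate-free lists). *)
Definition fin_abs_sum {X : Type} (f : X -> R) (l : list X) : R :=
  fold_right (fun y s => Rabs (f y) + s) 0 l.

Definition l1_norm_is {X : Type} (f : X -> R) (c : R) : Prop :=
  is_lub (fun s => exists l : list X, NoDup l /\ s = fin_abs_sum f l) c.

Definition l1_norm_le {X : Type} (f : X -> R) (c : R) : Prop :=
  forall l : list X, NoDup l -> fin_abs_sum f l <= c.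

Definition has_variation (X : MetricSpace) (xi : X -> X -> R) (eps : R) : Prop :=
  forall (k : nat) (x1 x2 : X), dist x1 x2 <= INR k ->
    l1_norm_le (fun y => xi x1 y - xi x2 y) (INR k * eps).

Definition uniform_property_A (XX : mfamily) : Prop :=
  forall eps : R, eps > 0 -> exists S : R, S > 0 /\
    forall X : MetricSpace, XX X ->
      exists xi : X -> X -> R,
        (forall x, l1_norm_is (xi x) 1) /\
        has_variation X xi eps /\
        (forall x y, xi x y <> 0 -> dist x y <= S).

(* Main.v *)
Require Import Defs.
From Stdlib Require Import Reals Lra Lia List Classical ClassicalEpsilon.
Open Scope R_scope.
Import ListNotations.
Local Notation dist := Defs.dist.
Local Notation dist_refl := Defs.dist_refl.
Local Notation dist_sym := Defs.dist_sym.
Local Notation dist_tri := Defs.dist_tri.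
Local Notation dist_eq := Defs.dist_eq.

Lemma dist_nonneg (X : MetricSpace) (x y : X) : 0 <= dist x y.
Proof.
  pose proof (dist_tri X x y x) as H. rewrite dist_refl in H.
  rewrite (dist_sym X y x) in H. lra.
Qed.

Section L1.
Context {T : Type}.

Lemma fin_nonneg (f : T -> R) l : 0 <= fin_abs_sum f l.
Proof. induction l; simpl. lra. pose proof (Rabs_pos (f a)). lra. Qed.

Lemma fin_ext (f g : T -> R) l : (forall y, f y = g y) -> fin_abs_sum f l = fin_abs_sum g l.
Proof. intros H; induction l; simpl; [lra| rewrite H, IHl; lra]. Qed.

Lemma fin_plus (f g : T -> R) l :
  fin_abs_sum (fun y => f y + g y) l <= fin_abs_sum f l + fin_abs_sum g l.
Proof. induction l; simpl. lra. pose proof (Rabs_triang (f a) (g a)). lra. Qed.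

Lemma fin_sub (f g : T -> R) l :
  fin_abs_sum (fun y => f y - g y) l <= fin_abs_sum f l + fin_abs_sum g l.
Proof. induction l; simpl. lra. pose proof (Rabs_triang (f a) (- g a)).
  rewrite Rabs_Ropp in H. unfold Rminus in *. lra. Qed.

Lemma fin_scal (c : R) (f : T -> R) l :
  fin_abs_sum (fun y => c * f y) l = Rabs c * fin_abs_sum f l.
Proof. induction l; simpl. lra. rewrite Rabs_mult, IHl. lra. Qed.

Lemma fin_app (f : T -> R) l1 l2 :
  fin_abs_sum f (l1 ++ l2) = fin_abs_sum f l1 + fin_abs_sum f l2.
Proof. induction l1; simpl. lra. rewrite IHl1. lra. Qed.

Lemma fin_abs (f : T -> R) l : fin_abs_sum (fun y => Rabs (f y)) l = fin_abs_sum f l.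
Proof. induction l; simpl. lra. rewrite Rabs_Rabsolu. rewrite IHl. reflexivity. Qed.

Lemma fin_incl (f : T -> R) l2 : forall l1, NoDup l1 -> incl l1 l2 ->
  fin_abs_sum f l1 <= fin_abs_sum f l2.
Proof.
  induction l2 as [|b l2 IH]; intros l1 Hn Hi.
  - destruct l1 as [|a l1]. simpl; lra. exfalso; apply (Hi a); left; auto.
  - simpl. destruct (classic (In b l1)) as [Hb|Hb].
    + destruct (in_split _ _ Hb) as [la [lb ->]].
      rewrite fin_app. simpl.
      assert (fin_abs_sum f (la ++ lb) <= fin_abs_sum f l2).
      { apply IH. eapply NoDup_remove_1; eauto.
        intros x Hx. pose proof (NoDup_remove_2 _ _ _ Hn) as Hnb.
        assert (In x (la ++ b :: lb)).
        { apply in_app_or in Hx. apply in_or_app. destruct Hx; [left|right; right]; auto. }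
        destruct (Hi x H) as [e|e]; auto. subst; contradiction. }
      rewrite fin_app in H. lra.
    + assert (fin_abs_sum f l1 <= fin_abs_sum f l2).
      { apply IH; auto. intros x Hx. destruct (Hi x Hx) as [e|e]; auto. subst; contradiction. }
      pose proof (Rabs_pos (f b)). lra.
Qed.

Lemma nodup_sup (l : list T) : exists l', NoDup l' /\ incl l l'.
Proof.
  induction l as [|a l [l' [Hn Hi]]].
  - exists []. split. constructor. intros x [].
  - destruct (classic (In a l')).
    + exists l'. split; auto. intros x [e|e]; subst; auto.
    + exists (a :: l'). split. constructor; auto. intros x [e|e]; [left|right]; auto.
Qed.

Lemma l1le_ext (f g : T -> R) c : (forall y, f y = g y) -> l1_norm_le f c -> l1_norm_le g c.
Proof. intros H H1 l Hl. rewrite <- (fin_ext f g l H). auto. Qed.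

Lemma l1le_mono (f : T -> R) a b : a <= b -> l1_norm_le f a -> l1_norm_le f b.
Proof. intros H H1 l Hl. specialize (H1 l Hl). lra. Qed.

Lemma l1le_plus (f g : T -> R) a b : l1_norm_le f a -> l1_norm_le g b ->
  l1_norm_le (fun y => f y + g y) (a + b).
Proof. intros H1 H2 l Hl. pose proof (fin_plus f g l). specialize (H1 l Hl); specialize (H2 l Hl). lra. Qed.

Lemma l1le_sub (f g : T -> R) a b : l1_norm_le f a -> l1_norm_le g b ->
  l1_norm_le (fun y => f y - g y) (a + b).
Proof. intros H1 H2 l Hl. pose proof (fin_sub f g l). specialize (H1 l Hl); specialize (H2 l Hl). lra. Qed.

Lemma l1le_scal (f : T -> R) c a : l1_norm_le f a ->
  l1_norm_le (fun y => c * f y) (Rabs c * a).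
Proof. intros H l Hl. rewrite fin_scal. apply Rmult_le_compat_l. apply Rabs_pos. auto. Qed.

Lemma l1le_zero (f : T -> R) : (forall y, f y = 0) -> l1_norm_le f 0.
Proof. intros H l Hl. induction l; simpl. lra. rewrite H, Rabs_R0.
  inversion Hl; subst. specialize (IHl H3). lra. Qed.

Lemma l1is_le (f : T -> R) c : l1_norm_is f c -> l1_norm_le f c.
Proof. intros [H _] l Hl. apply H. exists l; auto. Qed.

End L1.

Fixpoint sumk (k : nat) (f : nat -> R) : R :=
  match k with O => 0 | S n => sumk n f + f n end.

Lemma sumk_ext k f g : (forall i, (i < k)%nat -> f i = g i) -> sumk k f = sumk k g.
Proof. induction k; intros H; simpl; auto. rewrite IHk by (intros; apply H; lia). rewrite H by lia. reflexivity. Qed.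

Lemma sumk_le k f g : (forall i, (i < k)%nat -> f i <= g i) -> sumk k f <= sumk k g.
Proof. induction k; intros H; simpl. lra. pose proof (H k ltac:(lia)).
  assert (sumk k f <= sumk k g) by (apply IHk; intros; apply H; lia). lra. Qed.

Lemma sumk_plus k f g : sumk k (fun i => f i + g i) = sumk k f + sumk k g.
Proof. induction k; simpl. lra. rewrite IHk. lra. Qed.

Lemma sumk_minus k f g : sumk k (fun i => f i - g i) = sumk k f - sumk k g.
Proof. induction k; simpl. lra. rewrite IHk. lra. Qed.

Lemma sumk_scal k c f : sumk k (fun i => c * f i) = c * sumk k f.
Proof. induction k; simpl. lra. rewrite IHk. lra. Qed.

Lemma sumk_nonneg k f : (forall i, (i < k)%nat -> 0 <= f i) -> 0 <= sumk k f.
Proof. induction k; intros H; simpl. lra.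
  assert (0 <= sumk k f) by (apply IHk; intros; apply H; lia).
  pose proof (H k ltac:(lia)). lra. Qed.

Lemma sumk_abs k f : Rabs (sumk k f) <= sumk k (fun i => Rabs (f i)).
Proof. induction k; simpl. rewrite Rabs_R0; lra.
  pose proof (Rabs_triang (sumk k f) (f k)). lra. Qed.

Lemma sumk_single k f j : (forall i, (i < k)%nat -> 0 <= f i) -> (j < k)%nat -> f j <= sumk k f.
Proof. induction k; intros H Hj. lia. simpl.
  assert (0 <= sumk k f) by (apply sumk_nonneg; intros; apply H; lia).
  destruct (Nat.eq_dec j k). subst. lra.
  assert (f j <= sumk k f) by (apply IHk; [intros; apply H; lia| lia]).
  pose proof (H k ltac:(lia)). lra. Qed.

Lemma sumk_nz k f : sumk k f <> 0 -> exists i, (i < k)%nat /\ f i <> 0.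
Proof. induction k; simpl; intros H. lra.
  destruct (Req_dec (f k) 0). destruct IHk as [i [Hi Hf]]. lra. exists i; split; auto; lia.
  exists k; split; auto. Qed.

Lemma sumk_const k c : sumk k (fun _ => c) = INR k * c.
Proof. induction k; simpl sumk. simpl; lra. rewrite IHk, S_INR. lra. Qed.

Lemma l1le_sumk {T : Type} k (h : nat -> T -> R) (B : nat -> R) :
  (forall i, (i < k)%nat -> l1_norm_le (h i) (B i)) ->
  l1_norm_le (fun y => sumk k (fun i => h i y)) (sumk k B).
Proof.
  induction k; intros H; simpl.
  - apply l1le_zero. auto.
  - apply l1le_plus. apply IHk. intros; apply H; lia. apply H; lia.
Qed.

Lemma fin_sumk {T : Type} k (c : nat -> R) (g : nat -> T -> R) l :
  (forall i, (i < k)%nat -> 0 <= c i) -> (forall i y, (i < k)%nat -> 0 <= g i y) ->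
  fin_abs_sum (fun y => sumk k (fun i => c i * g i y)) l =
  sumk k (fun i => c i * fin_abs_sum (g i) l).
Proof.
  intros Hc Hg. induction l as [|a l IH]; simpl.
  - rewrite (sumk_ext k _ (fun _ => 0)) by (intros; ring). rewrite sumk_const. ring.
  - rewrite IH. rewrite Rabs_pos_eq.
    + rewrite <- sumk_plus. apply sumk_ext. intros i Hi.
      rewrite (Rabs_pos_eq (g i a)) by (apply Hg; auto). ring.
    + apply sumk_nonneg. intros i Hi. apply Rmult_le_pos; [apply Hc|apply Hg]; auto.
Qed.

Lemma common_list {T : Type} k (P : nat -> list T -> Prop) :
  (forall i, (i < k)%nat -> exists l, NoDup l /\ P i l) ->
  exists L, NoDup L /\ forall i, (i < k)%nat -> exists l, NoDup l /\ P i l /\ incl l L.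
Proof.
  induction k; intros H.
  - exists []. split. constructor. intros; lia.
  - destruct IHk as [L [HL HP]]. intros; apply H; lia.
    destruct (H k ltac:(lia)) as [lk [Hk Pk]].
    destruct (nodup_sup (L ++ lk)) as [L' [HL' Hi]].
    exists L'. split; auto. intros i Hi'.
    destruct (Nat.eq_dec i k). subst. exists lk. repeat split; auto.
    intros x Hx; apply Hi; apply in_or_app; auto.
    destruct (HP i ltac:(lia)) as [l [Hl [Pl Il]]]. exists l. repeat split; auto.
    intros x Hx; apply Hi; apply in_or_app; auto.
Qed.

Lemma comb_norm {T : Type} k (c : nat -> R) (g : nat -> T -> R) :
  (forall i, (i < k)%nat -> 0 <= c i) -> sumk k c = 1 ->
  (forall i y, (i < k)%nat -> 0 <= g i y) ->
  (forall i, (i < k)%nat -> l1_norm_le (g i) 1) ->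
  (forall i, (i < k)%nat -> 0 < c i -> l1_norm_is (g i) 1) ->
  l1_norm_is (fun y => sumk k (fun i => c i * g i y)) 1.
Proof.
  intros Hc Hs Hg Hle His. split.
  - intros s [l [Hl ->]]. rewrite fin_sumk; auto. rewrite <- Hs.
    apply sumk_le. intros i Hi. rewrite <- (Rmult_1_r (c i)) at 2.
    apply Rmult_le_compat_l; auto. apply Hle; auto.
  - intros b Hb. apply Rnot_lt_le. intros Hlt.
    set (t := (1 + b) / 2).
    assert (Hex : forall i, (i < k)%nat -> exists l, NoDup l /\ (0 < c i -> t < fin_abs_sum (g i) l)).
    { intros i Hi. destruct (Rlt_dec 0 (c i)) as [Hp|Hp].
      - destruct (His i Hi Hp) as [_ Hm].
        apply NNPP. intros Hn. assert (1 <= t).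
        { apply Hm. intros s [l [Hl ->]]. apply Rnot_lt_le. intros Hs'.
          apply Hn. exists l. split; auto. }
        unfold t in H. lra.
      - exists []. split. constructor. intros; lra. }
    destruct (common_list k _ Hex) as [L [HL HP]].
    assert (Hfl : fin_abs_sum (fun y => sumk k (fun i => c i * g i y)) L <= b).
    { apply Hb. exists L. auto. }
    rewrite fin_sumk in Hfl; auto.
    assert (t * sumk k c <= sumk k (fun i => c i * fin_abs_sum (g i) L)).
    { rewrite <- sumk_scal. apply sumk_le. intros i Hi.
      destruct (HP i Hi) as [l [Hl [Pl Il]]].
      destruct (Rlt_dec 0 (c i)) as [Hp|Hp].
      + specialize (Pl Hp). pose proof (fin_incl (g i) L l Hl Il). nra.
      + assert (c i = 0) by (pose proof (Hc i Hi); lra). rewrite H. lra. }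
    rewrite Hs in H. unfold t in H. lra.
Qed.

Section Sub.
Context {X : MetricSpace} (U : X -> Prop).

Definition ext (h : subspace X U -> R) : X -> R :=
  fun y => match excluded_middle_informative (U y) with
           | left hy => h (exist _ y hy) | right _ => 0 end.

Fixpoint restrict (l : list X) : list (subspace X U) :=
  match l with
  | [] => []
  | y :: t => match excluded_middle_informative (U y) with
              | left hy => (exist _ y hy : subspace X U) :: restrict t
              | right _ => restrict t end
  end.

Lemma restrict_in l (a : subspace X U) : In a (restrict l) -> In (proj1_sig a) l.
Proof. induction l; simpl. auto.
  destruct (excluded_middle_informative (U a0)); simpl; intros H.
  destruct H as [<-|H]; auto. auto. Qed.

Lemma restrict_nodup l : NoDup l -> NoDup (restrict l).
Proof. induction l; simpl; intros H. constructor. inversion H; subst.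
  destruct (excluded_middle_informative (U a)); auto. constructor; auto.
  intros Hin. apply restrict_in in Hin. simpl in Hin. contradiction. Qed.

Lemma fin_restrict h l : fin_abs_sum (ext h) l = fin_abs_sum h (restrict l).
Proof. induction l; simpl. auto. unfold ext at 1.
  destruct (excluded_middle_informative (U a)); simpl. rewrite IHl; auto.
  rewrite Rabs_R0, IHl. apply Rplus_0_l. Qed.

Lemma ext_val h (a : subspace X U) : ext h (proj1_sig a) = h a.
Proof. unfold ext. destruct a as [y hy]. simpl.
  destruct (excluded_middle_informative (U y)). f_equal. f_equal. apply proof_irrelevance.
  contradiction. Qed.

Lemma ext_out h y : ~ U y -> ext h y = 0.
Proof. intros H. unfold ext. destruct (excluded_middle_informative (U y)); auto. contradiction. Qed.

Lemma ext_le h c : l1_norm_le h c -> l1_norm_le (ext h) c.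
Proof. intros H l Hl. rewrite fin_restrict. apply H. apply restrict_nodup; auto. Qed.

Lemma map_proj_nodup (l : list (subspace X U)) : NoDup l -> NoDup (map (@proj1_sig X U) l).
Proof. induction l; simpl; intros H. constructor. inversion H; subst. constructor; auto.
  intros Hin. apply in_map_iff in Hin. destruct Hin as [b [Hb Hin]].
  destruct a as [y hy], b as [z hz]. simpl in Hb. subst.
  assert (hy = hz) by apply proof_irrelevance. subst. contradiction. Qed.

Lemma fin_map h (l : list (subspace X U)) : fin_abs_sum (ext h) (map (@proj1_sig X U) l) = fin_abs_sum h l.
Proof. induction l; simpl; auto. rewrite IHl. f_equal. f_equal. apply ext_val. Qed.

Lemma ext_is h c : l1_norm_is h c -> l1_norm_is (ext h) c.
Proof. intros [H1 H2]. split.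
  - intros s [l [Hl ->]]. rewrite fin_restrict. apply H1. exists (restrict l). split; auto.
    apply restrict_nodup; auto.
  - intros b Hb. apply H2. intros s [l [Hl ->]]. rewrite <- fin_map. apply Hb.
    exists (map (@proj1_sig X U) l). split; auto. apply map_proj_nodup; auto.
Qed.

End Sub.

Lemma l1is_abs {T : Type} (f : T -> R) c : l1_norm_is f c -> l1_norm_is (fun y => Rabs (f y)) c.
Proof. intros [H1 H2]. split.
  - intros s [l [Hl ->]]. rewrite fin_abs. apply H1. exists l; auto.
  - intros b Hb. apply H2. intros s [l [Hl ->]]. rewrite <- fin_abs. apply Hb. exists l; auto.
Qed.

Lemma l1le_absdiff {T : Type} (f g : T -> R) c : l1_norm_le (fun y => f y - g y) c ->
  l1_norm_le (fun y => Rabs (f y) - Rabs (g y)) c.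
Proof. intros H l Hl. eapply Rle_trans; [|apply (H l Hl)]. clear H Hl.
  induction l; simpl. lra. pose proof (Rabs_triang_inv2 (f a) (g a)). lra. Qed.

Section Zg.
Context {X : MetricSpace} (U : X -> Prop) (xi : subspace X U -> subspace X U -> R).

Definition Zg (x y : X) : R :=
  match excluded_middle_informative (U x) with
  | left hx => ext U (fun b => Rabs (xi (exist _ x hx) b)) y
  | right _ => 0 end.

Lemma Zg_nonneg x y : 0 <= Zg x y.
Proof. unfold Zg. destruct (excluded_middle_informative (U x)); [|lra].
  unfold ext. destruct (excluded_middle_informative (U y)); [apply Rabs_pos|lra]. Qed.

Lemma Zg_le x : (forall a, l1_norm_le (xi a) 1) -> l1_norm_le (Zg x) 1.
Proof. intros H. unfold Zg. destruct (excluded_middle_informative (U x)).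
  - apply ext_le. intros l Hl. rewrite fin_abs. apply H; auto.
  - eapply l1le_mono; [|apply l1le_zero]. lra. auto. Qed.

Lemma Zg_is x : U x -> (forall a, l1_norm_is (xi a) 1) -> l1_norm_is (Zg x) 1.
Proof. intros Hx H. unfold Zg. destruct (excluded_middle_informative (U x)); [|contradiction].
  apply ext_is. apply l1is_abs. apply H. Qed.

Lemma Zg_supp S x y : (forall a b, xi a b <> 0 -> dist a b <= S) -> Zg x y <> 0 -> dist x y <= S.
Proof. intros H. unfold Zg. destruct (excluded_middle_informative (U x)) as [hx|]; [|lra].
  unfold ext. destruct (excluded_middle_informative (U y)) as [hy|]; [|lra].
  intros Hn. apply (H (exist _ x hx) (exist _ y hy)). intros E; apply Hn; rewrite E; apply Rabs_R0. Qed.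

Lemma Zg_var eps' (n : nat) x1 x2 : has_variation (subspace X U) xi eps' -> U x1 -> U x2 ->
  dist x1 x2 <= INR n -> l1_norm_le (fun y => Zg x1 y - Zg x2 y) (INR n * eps').
Proof. intros Hv H1 H2 Hd. unfold Zg.
  destruct (excluded_middle_informative (U x1)) as [h1|]; [|contradiction].
  destruct (excluded_middle_informative (U x2)) as [h2|]; [|contradiction].
  apply (l1le_ext (ext U (fun b => Rabs (xi (exist _ x1 h1) b) - Rabs (xi (exist _ x2 h2) b)))).
  - intros y. unfold ext. destruct (excluded_middle_informative (U y)); lra.
  - apply ext_le. apply l1le_absdiff. apply Hv. exact Hd.
Qed.
End Zg.

Lemma level (X : MetricSpace) (UU : (X -> Prop) -> Prop) (r eps' S : R) :
  0 <= r -> r_disjoint X r UU ->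
  (forall U, UU U -> exists xi : subspace X U -> subspace X U -> R,
      (forall x, l1_norm_is (xi x) 1) /\ has_variation (subspace X U) xi eps' /\
      (forall x y, xi x y <> 0 -> dist x y <= S)) ->
  exists zeta : X -> X -> R,
    (forall x y, 0 <= zeta x y) /\
    (forall x, l1_norm_le (zeta x) 1) /\
    (forall x, (exists U, UU U /\ U x) -> l1_norm_is (zeta x) 1) /\
    (forall x y, zeta x y <> 0 -> dist x y <= S) /\
    (forall (n : nat) x1 x2, (exists U, UU U /\ U x1) -> (exists U, UU U /\ U x2) ->
       dist x1 x2 <= INR n -> dist x1 x2 <= r ->
       l1_norm_le (fun y => zeta x1 y - zeta x2 y) (INR n * eps')).
Proof.
  intros Hr Hdisj Hpieces.
  set (P := fun (U : X -> Prop) (xi : subspace X U -> subspace X U -> R) =>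
      (forall x, l1_norm_is (xi x) 1) /\ has_variation (subspace X U) xi eps' /\
      (forall x y, xi x y <> 0 -> dist x y <= S)).
  set (XI := fun U => epsilon (inhabits (fun (_ _ : subspace X U) => 0)) (P U)).
  assert (HXI : forall U, UU U -> P U (XI U)).
  { intros U HU. apply epsilon_spec. apply Hpieces; auto. }
  set (Ux := fun x => epsilon (inhabits (fun _ : X => False)) (fun U => UU U /\ U x)).
  assert (HUx : forall x, (exists U, UU U /\ U x) -> UU (Ux x) /\ Ux x x).
  { intros x H. exact (epsilon_spec _ (fun U => UU U /\ U x) H). }
  exists (fun x y => match excluded_middle_informative (exists U, UU U /\ U x) with
                     | left _ => Zg (Ux x) (XI (Ux x)) x y | right _ => 0 end).
  split; [|split; [|split; [|split]]].
  - intros x y. destruct (excluded_middle_informative _); [apply Zg_nonneg|lra].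
  - intros x. destruct (excluded_middle_informative _) as [e|].
    + destruct (HUx x e) as [HU _]. apply Zg_le. intros a. apply l1is_le. apply (HXI _ HU).
    + eapply l1le_mono; [|apply l1le_zero]. lra. auto.
  - intros x e. destruct (excluded_middle_informative _) as [_|]; [|contradiction].
    destruct (HUx x e) as [HU Hx]. apply Zg_is; auto. apply (HXI _ HU).
  - intros x y. destruct (excluded_middle_informative _) as [e|]; [|lra].
    destruct (HUx x e) as [HU Hx]. apply Zg_supp. apply (HXI _ HU).
  - intros n x1 x2 e1 e2 Hd Hdr.
    destruct (excluded_middle_informative (exists U, UU U /\ U x1)) as [_|]; [|contradiction].
    destruct (excluded_middle_informative (exists U, UU U /\ U x2)) as [_|]; [|contradiction].
    destruct (HUx x1 e1) as [HU1 Hx1]. destruct (HUx x2 e2) as [HU2 Hx2].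
    assert (Ux x2 = Ux x1).
    { apply NNPP. intros Hne. specialize (Hdisj _ _ HU1 HU2 (fun E => Hne (eq_sym E)) x1 x2 Hx1 Hx2).
      lra. }
    rewrite H. rewrite H in Hx2. apply Zg_var; auto. apply (HXI _ HU1).
Qed.

Section DistSet.
Context {X : MetricSpace} (A : X -> Prop) (M : R) (HM : 0 <= M).

Definition Eset (x : X) (e : R) : Prop := e = M \/ exists y, A y /\ e = dist x y.

Definition isglb (x : X) (t : R) : Prop :=
  (forall e, Eset x e -> t <= e) /\ (forall t', (forall e, Eset x e -> t' <= e) -> t' <= t).

Lemma glb_ex x : exists t, isglb x t.
Proof.
  destruct (completeness (fun u => Eset x (- u))) as [m [Hm1 Hm2]].
  - exists 0. intros u Hu. destruct Hu as [Hu|[y [_ Hu]]].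
    + lra.
    + pose proof (dist_nonneg X x y). lra.
  - exists (- M). left. lra.
  - exists (- m). split.
    + intros e He. assert (- e <= m). { apply Hm1. rewrite Ropp_involutive. auto. } lra.
    + intros t' Ht'. assert (m <= - t'). { apply Hm2. intros u Hu. specialize (Ht' _ Hu). lra. } lra.
Qed.

Definition Dd (x : X) : R := epsilon (inhabits 0) (isglb x).

Lemma Dd_spec x : isglb x (Dd x).
Proof. unfold Dd. apply epsilon_spec. apply glb_ex. Qed.

Lemma Dd_nonneg x : 0 <= Dd x.
Proof. apply (proj2 (Dd_spec x)). intros e [He|[y [_ He]]]. lra. subst; apply dist_nonneg. Qed.

Lemma Dd_leM x : Dd x <= M.
Proof. apply (proj1 (Dd_spec x)). left; auto. Qed.

Lemma Dd_in x : A x -> Dd x <= 0.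
Proof. intros H. rewrite <- (dist_refl X x). apply (proj1 (Dd_spec x)). right. exists x; auto. Qed.

Lemma Dd_lip x1 x2 : Dd x1 <= Dd x2 + dist x1 x2.
Proof.
  assert (Dd x1 - dist x1 x2 <= Dd x2).
  { apply (proj2 (Dd_spec x2)). intros e [He|[y [Hy He]]].
    - subst. pose proof (Dd_leM x1). pose proof (dist_nonneg X x1 x2). lra.
    - subst. assert (Dd x1 <= dist x1 y). { apply (proj1 (Dd_spec x1)). right; exists y; auto. }
      pose proof (dist_tri X x1 x2 y). lra. }
  lra.
Qed.

Lemma Dd_abs x1 x2 : Rabs (Dd x1 - Dd x2) <= dist x1 x2.
Proof. pose proof (Dd_lip x1 x2). pose proof (Dd_lip x2 x1). rewrite (dist_sym X x2 x1) in H0.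
  apply Rabs_le. lra. Qed.

Lemma Dd_proj x : Dd x < M -> exists y, A y /\ dist x y <= Dd x + 1.
Proof.
  intros H. apply NNPP. intros Hn.
  assert (Rmin M (Dd x + 1) <= Dd x).
  { apply (proj2 (Dd_spec x)). intros e [He|[y [Hy He]]].
    - subst. apply Rmin_l.
    - subst. assert (dist x y > Dd x + 1).
      { apply Rnot_le_lt. intros Hle. apply Hn. exists y; auto. }
      pose proof (Rmin_r M (Dd x + 1)). lra. }
  unfold Rmin in H0. destruct (Rle_dec M (Dd x + 1)); lra.
Qed.

Definition pp (x : X) : X := epsilon (inhabits x) (fun y => A y /\ dist x y <= Dd x + 1).

Lemma pp_spec x : Dd x < M -> A (pp x) /\ dist x (pp x) <= Dd x + 1.
Proof. intros H. unfold pp. apply (epsilon_spec _ (fun y => A y /\ dist x y <= Dd x + 1)).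
  apply Dd_proj; auto. Qed.

End DistSet.

Lemma norm_lemma k (a b : nat -> R) :
  (forall i, (i < k)%nat -> 0 <= b i) -> 1 <= sumk k a -> 1 <= sumk k b ->
  sumk k (fun i => Rabs (a i / sumk k a - b i / sumk k b)) <= 2 * sumk k (fun i => Rabs (a i - b i)).
Proof.
  intros Hb HA HB. set (SA := sumk k a) in *. set (SB := sumk k b) in *.
  set (Q := sumk k (fun i => Rabs (a i - b i))).
  assert (HQ : Rabs (SB - SA) <= Q).
  { unfold SA, SB, Q. rewrite <- sumk_minus. eapply Rle_trans. apply sumk_abs.
    apply Req_le. apply sumk_ext. intros. rewrite <- Rabs_Ropp. f_equal. ring. }
  eapply Rle_trans.
  { apply (sumk_le k _ (fun i => / SA * Rabs (a i - b i) + (Rabs (SB - SA) / (SA * SB)) * b i)).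
    intros i Hi. pose proof (Hb i Hi).
    replace (a i / SA - b i / SB) with (/ SA * (a i - b i) + (SB - SA) / (SA * SB) * b i)
      by (field; lra).
    eapply Rle_trans. apply Rabs_triang. rewrite !Rabs_mult.
    rewrite (Rabs_pos_eq (/ SA)) by (apply Rlt_le, Rinv_0_lt_compat; lra).
    rewrite (Rabs_pos_eq (b i)) by auto.
    unfold Rdiv. rewrite Rabs_mult. rewrite (Rabs_pos_eq (/ (SA * SB))).
    lra. apply Rlt_le, Rinv_0_lt_compat. nra. }
  rewrite sumk_plus, !sumk_scal. fold SB. fold Q.
  replace (Rabs (SB - SA) / (SA * SB) * SB) with (Rabs (SB - SA) / SA) by (field; lra).
  assert (0 <= Q) by (unfold Q; apply sumk_nonneg; intros; apply Rabs_pos).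
  assert (/ SA * Q <= Q).
  { assert (/ SA <= 1). { rewrite <- Rinv_1. apply Rinv_le_contravar; lra. }
    assert (0 < / SA) by (apply Rinv_0_lt_compat; lra). nra. }
  assert (Rabs (SB - SA) / SA <= Q).
  { unfold Rdiv. assert (/ SA <= 1). { rewrite <- Rinv_1. apply Rinv_le_contravar; lra. }
    assert (0 < / SA) by (apply Rinv_0_lt_compat; lra). pose proof (Rabs_pos (SB - SA)). nra. }
  lra.
Qed.

Lemma geom k : sumk k (fun i => / 2 ^ (S i)) = 1 - / 2 ^ k.
Proof. induction k. simpl; lra.
  change (sumk (S k) ?f) with (sumk k f + f k). rewrite IHk.
  cbv beta. simpl pow. field. apply pow_nonzero. lra. Qed.

Lemma geom_N (N : nat) k : (0 < N)%nat ->
  sumk k (fun i => / INR (N * 2 ^ (S i))) <= / INR N.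
Proof. intros HN.
  rewrite (sumk_ext k _ (fun i => / INR N * / 2 ^ (S i))).
  - rewrite sumk_scal, geom. assert (0 < / INR N) by (apply Rinv_0_lt_compat, lt_0_INR; auto).
    assert (0 < / 2 ^ k) by (apply Rinv_0_lt_compat, pow_lt; lra). nra.
  - intros i Hi. rewrite mult_INR, pow_INR. simpl (INR 2). rewrite Rinv_mult. reflexivity.
Qed.

Lemma l1le_scal0 {T : Type} (h : T -> R) c B : (c <> 0 -> l1_norm_le h B) ->
  l1_norm_le (fun y => c * h y) (Rabs c * B).
Proof. intros H. destruct (Req_dec c 0) as [->|Hc].
  - rewrite Rabs_R0, Rmult_0_l. apply l1le_zero. intros; ring.
  - apply l1le_scal. auto. Qed.

Lemma Rmax0_lip a b : Rabs (Rmax 0 a - Rmax 0 b) <= Rabs (a - b).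
Proof. unfold Rmax. destruct (Rle_dec 0 a); destruct (Rle_dec 0 b);
  apply Rabs_le; pose proof (Rabs_pos (a - b)); unfold Rabs in *;
  destruct (Rcase_abs (a - b)); lra. Qed.

Lemma combine (X : MetricSpace) (eps : R) (k : nat) (Ln : nat -> nat) (A : nat -> X -> Prop)
  (zeta : nat -> X -> X -> R) (Sf : nat -> R) (Stot : R) :
  0 < eps ->
  (forall i, 0 < INR (Ln i)) ->
  sumk k (fun i => / INR (Ln i)) <= eps / 4 ->
  (forall x, exists i, (i < k)%nat /\ A i x) ->
  (forall i, (i<k)%nat -> forall x y, 0 <= zeta i x y) ->
  (forall i, (i<k)%nat -> forall x, l1_norm_le (zeta i x) 1) ->
  (forall i, (i<k)%nat -> forall x, A i x -> l1_norm_is (zeta i x) 1) ->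
  (forall i, (i<k)%nat -> forall x y, zeta i x y <> 0 -> dist x y <= Sf i) ->
  (forall i, (i<k)%nat -> forall (n : nat) x1 x2, A i x1 -> A i x2 -> dist x1 x2 <= INR n ->
       dist x1 x2 <= 2 * INR (Ln i) + 4 / eps + 2 ->
       l1_norm_le (fun y => zeta i x1 y - zeta i x2 y) (INR n * (eps / (2 * (2 * INR (Ln i) + 4))))) ->
  (forall i, (i<k)%nat -> INR (Ln i) + 1 + Sf i <= Stot) ->
  exists xi : X -> X -> R, (forall x, l1_norm_is (xi x) 1) /\ has_variation X xi eps /\
     (forall x y, xi x y <> 0 -> dist x y <= Stot).
Proof.
  intros Heps HL Hsum Hcov Zn Zle Zis Zsupp Zvar HStot.
  set (L := fun i => INR (Ln i)).
  set (M := fun i => L i + 2 / eps).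
  assert (HM : forall i, 0 <= M i).
  { intros i. unfold M, L. pose proof (HL i). assert (0 < 2 / eps) by (apply Rdiv_lt_0_compat; lra). lra. }
  set (D := fun i x => Dd (A i) (M i) x).
  set (ph := fun i x => Rmax 0 (1 - D i x / L i)).
  set (p := fun i x => pp (A i) (M i) x).
  set (Phi := fun x => sumk k (fun i => ph i x)).
  set (c := fun i x => ph i x / Phi x).
  assert (ph_nn : forall i x, 0 <= ph i x) by (intros; apply Rmax_l).
  assert (ph_in : forall i x, A i x -> ph i x = 1).
  { intros i x H. unfold ph. pose proof (Dd_in (A i) (M i) (HM i) x H).
    pose proof (Dd_nonneg (A i) (M i) (HM i) x). fold (D i x) in H0, H1.
    replace (D i x) with 0 by lra. unfold Rdiv. rewrite Rmult_0_l, Rminus_0_r.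
    unfold Rmax. destruct (Rle_dec 0 1); lra. }
  assert (ph_pos : forall i x, 0 < ph i x -> D i x < L i).
  { intros i x H. unfold ph in H. apply Rnot_le_lt. intros Hle. unfold Rmax in H.
    destruct (Rle_dec 0 (1 - D i x / L i)) as [r|]; [|lra].
    assert (1 <= D i x / L i). { apply (Rmult_le_reg_r (L i)). apply HL.
      unfold Rdiv. rewrite Rmult_assoc, Rinv_l, Rmult_1_r, Rmult_1_l. auto. apply Rgt_not_eq, HL. }
    lra. }
  assert (ph_lip : forall i x1 x2, Rabs (ph i x1 - ph i x2) <= dist x1 x2 * / L i).
  { intros i x1 x2. assert (HLi := HL i). fold (L i) in HLi.
    assert (Eqr : forall a b cc : R, 1 - a / cc - (1 - b / cc) = (b - a) * / cc)
      by (intros; unfold Rdiv; ring).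
    pose proof (Rmax0_lip (1 - D i x1 / L i) (1 - D i x2 / L i)) as H0.
    rewrite Eqr, Rabs_mult in H0. rewrite (Rabs_pos_eq (/ L i)) in H0 by (apply Rlt_le, Rinv_0_lt_compat, HLi).
    pose proof (Dd_abs (A i) (M i) (HM i) x2 x1) as H1. fold (D i x1) (D i x2) in H1.
    rewrite (dist_sym X x2 x1) in H1.
    assert (0 < / L i) by (apply Rinv_0_lt_compat, HLi).
    unfold ph. nra. }
  assert (Phi1 : forall x, 1 <= Phi x).
  { intros x. destruct (Hcov x) as [j [Hj Aj]]. unfold Phi. rewrite <- (ph_in j x Aj).
    apply (sumk_single k (fun i => ph i x)); auto. }
  assert (c_nn : forall i x, 0 <= c i x).
  { intros. unfold c, Rdiv. apply Rmult_le_pos; auto. apply Rlt_le, Rinv_0_lt_compat. pose proof (Phi1 x); lra. }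
  assert (c_sum : forall x, sumk k (fun i => c i x) = 1).
  { intros x. unfold c. rewrite (sumk_ext k _ (fun i => / Phi x * ph i x)) by (intros; unfold Rdiv; ring).
    rewrite sumk_scal. fold (Phi x). field. pose proof (Phi1 x); lra. }
  assert (c_pos : forall i x, c i x <> 0 -> 0 < ph i x).
  { intros i x H. destruct (ph_nn i x) as [H'|H']; auto. exfalso. apply H. unfold c. rewrite <- H'. unfold Rdiv; ring. }
  assert (pspec : forall i x, D i x < M i -> A i (p i x) /\ dist x (p i x) <= D i x + 1).
  { intros i x H. apply pp_spec; auto. }
  assert (LM : forall i, L i < M i).
  { intros i. unfold M. assert (0 < 2 / eps) by (apply Rdiv_lt_0_compat; lra). lra. }
  assert (xi_norm : forall x, l1_norm_is (fun y => sumk k (fun i => c i x * zeta i (p i x) y)) 1).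
  { intros x. apply (comb_norm k (fun i => c i x) (fun i => zeta i (p i x))).
    - intros; apply c_nn.
    - apply c_sum.
    - intros i y Hi. apply Zn; auto.
    - intros i Hi. apply Zle; auto.
    - intros i Hi Hc. apply Zis; auto. apply pspec. pose proof (ph_pos i x (c_pos i x ltac:(lra))).
      pose proof (LM i). lra. }
  exists (fun x y => sumk k (fun i => c i x * zeta i (p i x) y)).
  split; [|split].
  -
    exact xi_norm.
  -
    intros m x1 x2 Hd.
    destruct (Rle_dec 2 (INR m * eps)) as [Hbig|Hsmall].
    + eapply l1le_mono; [apply Hbig|]. replace 2 with (1 + 1) by ring. apply l1le_sub.
      * apply l1is_le. apply xi_norm.
      * apply l1is_le. apply xi_norm.
    + destruct m as [|m'].
      * simpl in Hd. assert (x1 = x2). { apply (dist_eq X). pose proof (dist_nonneg X x1 x2). lra. }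
        subst x2. simpl. rewrite Rmult_0_l. apply l1le_zero. intros; ring.
      * set (m := S m') in *.
        assert (Hm1 : 1 <= INR m) by (unfold m; rewrite S_INR; pose proof (pos_INR m'); lra).
        assert (Hm2 : INR m < 2 / eps).
        { apply Rnot_le_lt. intros H. apply Hsmall. apply (Rmult_le_compat_r eps) in H; [|lra].
          unfold Rdiv in H. rewrite Rmult_assoc, Rinv_l, Rmult_1_r in H; lra. }
        apply (l1le_ext (fun y => sumk k (fun i => (c i x1 - c i x2) * zeta i (p i x1) y) +
                                 sumk k (fun i => c i x2 * (zeta i (p i x1) y - zeta i (p i x2) y)))).
        { intros y. rewrite <- sumk_plus, <- sumk_minus. apply sumk_ext. intros; ring. }
        eapply l1le_mono; [|apply l1le_plus; apply l1le_sumk].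
        3: { intros i Hi. apply (l1le_scal0 _ (c i x2) (INR m * eps / 2)). intros Hc.
             assert (H2 : D i x2 < L i) by (apply ph_pos, c_pos; auto).
             assert (H1 : D i x1 < M i).
             { pose proof (Dd_lip (A i) (M i) (HM i) x1 x2). fold (D i x1) (D i x2) in H.
               unfold M. lra. }
             assert (H2' : D i x2 < M i) by (pose proof (LM i); lra).
             destruct (pspec i x1 H1) as [A1 d1]. destruct (pspec i x2 H2') as [A2 d2].
             pose proof (Dd_lip (A i) (M i) (HM i) x1 x2). fold (D i x1) (D i x2) in H.
             assert (Hpp : dist (p i x1) (p i x2) <= 2 * L i + 2 * INR m + 2).
             { pose proof (dist_tri X (p i x1) x1 x2). pose proof (dist_tri X (p i x1) x2 (p i x2)).
               rewrite (dist_sym X (p i x1) x1) in H0. lra. }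
             set (n := (2 * Ln i + 2 * m + 2)%nat).
             assert (Hn : INR n = 2 * L i + 2 * INR m + 2).
             { unfold n. rewrite !plus_INR, !mult_INR. simpl (INR 2). unfold L. lra. }
             eapply l1le_mono; [|apply (Zvar i Hi n); auto].
             - rewrite Hn. pose proof (HL i). fold (L i) in H0.
               assert (2 * L i + 2 * INR m + 2 <= INR m * (2 * L i + 4)) by nra.
               apply (Rmult_le_compat_r (eps / (2 * (2 * L i + 4)))) in H3.
               replace (INR m * (2 * L i + 4) * (eps / (2 * (2 * L i + 4)))) with (INR m * eps / 2) in H3
                 by (field; lra). exact H3.
               unfold Rdiv. apply Rmult_le_pos. lra. apply Rlt_le, Rinv_0_lt_compat. lra.
             - lra.
             - fold (L i). lra. }
        2: { intros i Hi. apply l1le_scal. apply Zle; auto. }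
        rewrite (sumk_ext k (fun i => Rabs (c i x2) * (INR m * eps / 2)) (fun i => (INR m * eps / 2) * c i x2))
          by (intros; rewrite Rabs_pos_eq; auto; ring).
        rewrite sumk_scal, c_sum.
        rewrite (sumk_ext k (fun i => Rabs (c i x1 - c i x2) * 1) (fun i => Rabs (c i x1 - c i x2))) by (intros; ring).
        assert (Hn : sumk k (fun i => Rabs (c i x1 - c i x2)) <= 2 * sumk k (fun i => Rabs (ph i x1 - ph i x2))).
        { apply (norm_lemma k (fun i => ph i x1) (fun i => ph i x2)); auto. apply Phi1. apply Phi1. }
        assert (Hp : sumk k (fun i => Rabs (ph i x1 - ph i x2)) <= INR m * (eps / 4)).
        { eapply Rle_trans. apply (sumk_le k _ (fun i => INR m * / L i)).
          intros i Hi. eapply Rle_trans. apply ph_lip. apply Rmult_le_compat_r; auto.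
          apply Rlt_le, Rinv_0_lt_compat, HL.
          rewrite sumk_scal. apply Rmult_le_compat_l. apply pos_INR. apply Hsum. }
        lra.
  -
    intros x y Hxy. destruct (sumk_nz _ _ Hxy) as [i [Hi Hne]].
    assert (Hc : c i x <> 0) by (intros E; apply Hne; rewrite E; ring).
    assert (Hz : zeta i (p i x) y <> 0) by (intros E; apply Hne; rewrite E; ring).
    pose proof (ph_pos i x (c_pos i x Hc)) as G1.
    destruct (pspec i x) as [Ap dp]. pose proof (LM i); lra.
    pose proof (Zsupp i Hi _ _ Hz) as G2. pose proof (dist_tri X x (p i x) y) as G3.
    pose proof (HStot i Hi) as G4. fold (L i) in G4. lra.
Qed.

Fixpoint smax (k : nat) (g : nat -> R) : R :=
  match k with O => 1 | S n => Rmax (smax n g) (g n) end.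

Lemma smax_ge1 k g : 1 <= smax k g.
Proof. induction k; simpl. lra. eapply Rle_trans; [apply IHk| apply Rmax_l]. Qed.

Lemma smax_ge k g i : (i < k)%nat -> g i <= smax k g.
Proof. induction k; intros H. lia. simpl. destruct (Nat.eq_dec i k).
  subst; apply Rmax_r. eapply Rle_trans; [apply IHk; lia| apply Rmax_l]. Qed.

Theorem theorem1p9 (YY : (nat -> R) -> mfamily) (XX : mfamily) :
  (forall Rs : nat -> R, uniform_property_A (YY Rs)) ->
  (forall Rs : nat -> R, uniformly_decomposable Rs XX (YY Rs)) ->
  uniform_property_A XX.
Proof.
  intros H1 H2 eps Heps.
  destruct (archimed_cor1 (eps / 4)) as [N [HN HN0]]. lra.
  set (Ln := fun i => (N * 2 ^ (S i))%nat).
  assert (HL : forall i, 0 < INR (Ln i)).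
  { intros i. apply lt_0_INR. unfold Ln. pose proof (Nat.pow_nonzero 2 (S i) ltac:(lia)). lia. }
  set (rr := fun i => 2 * INR (Ln i) + 4 / eps + 2).
  set (el := fun i => eps / (2 * (2 * INR (Ln i) + 4))).
  assert (Hel : forall i, el i > 0).
  { intros i. unfold el. pose proof (HL i). unfold Rdiv. apply Rmult_lt_0_compat. lra.
    apply Rinv_0_lt_compat. lra. }
  assert (Hrr : forall i, 0 <= rr i).
  { intros i. unfold rr. pose proof (HL i). assert (0 < 4 / eps).
    { unfold Rdiv. apply Rmult_lt_0_compat. lra. apply Rinv_0_lt_compat; lra. } lra. }
  destruct (H2 rr) as [k Hk].
  assert (HS : forall i, { S0 : R | S0 > 0 /\ forall X, YY rr X -> exists xi : X -> X -> R,
        (forall x, l1_norm_is (xi x) 1) /\ has_variation X xi (el i) /\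
        (forall x y, xi x y <> 0 -> dist x y <= S0) }).
  { intros i. apply constructive_indefinite_description. apply (H1 rr (el i) (Hel i)). }
  set (Sf := fun i => proj1_sig (HS i)).
  set (Stot := smax k (fun i => INR (Ln i) + 1 + Sf i)).
  exists Stot. split.
  { pose proof (smax_ge1 k (fun i => INR (Ln i) + 1 + Sf i)). fold Stot in H. lra. }
  intros X HX. destruct (Hk X HX) as [UU [HY [Hdj Hcv]]].
  assert (Hz : forall i, exists zeta : X -> X -> R, (i < k)%nat ->
    (forall x y, 0 <= zeta x y) /\
    (forall x, l1_norm_le (zeta x) 1) /\
    (forall x, (exists U, UU i U /\ U x) -> l1_norm_is (zeta x) 1) /\
    (forall x y, zeta x y <> 0 -> dist x y <= Sf i) /\
    (forall (n : nat) x1 x2, (exists U, UU i U /\ U x1) -> (exists U, UU i U /\ U x2) ->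
       dist x1 x2 <= INR n -> dist x1 x2 <= rr i ->
       l1_norm_le (fun y => zeta x1 y - zeta x2 y) (INR n * el i))).
  { intros i. destruct (Nat.lt_ge_cases i k) as [Hi|Hi].
    - destruct (level X (UU i) (rr i) (el i) (Sf i)) as [zeta Hzeta].
      + apply Hrr.
      + apply Hdj; auto.
      + intros U HU. apply (proj2 (proj2_sig (HS i))). apply HY with i; auto.
      + exists zeta. intros _. exact Hzeta.
    - exists (fun _ _ => 0). intros; lia. }
  set (zf := fun i => proj1_sig (constructive_indefinite_description _ (Hz i))).
  assert (Hzf : forall i, (i < k)%nat -> _) by (intros i; exact (proj2_sig (constructive_indefinite_description _ (Hz i)))).
  apply (combine X eps k Ln (fun i x => exists U, UU i U /\ U x) zf Sf Stot).
  - exact Heps.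
  - exact HL.
  - eapply Rle_trans. apply geom_N; auto. lra.
  - intros x. destruct (Hcv x) as [i [U [Hi [HU Hx]]]]. exists i. split; auto. exists U; auto.
  - intros i Hi. apply (Hzf i Hi).
  - intros i Hi. apply (Hzf i Hi).
  - intros i Hi. apply (Hzf i Hi).
  - intros i Hi. apply (Hzf i Hi).
  - intros i Hi. apply (Hzf i Hi).
  - intros i Hi. unfold Stot. apply (smax_ge k (fun i => INR (Ln i) + 1 + Sf i)). auto.
Qed.
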